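(* Let $\beta \in \mathcal{P}$ and $\alpha \in E$ satisfy $\alpha^{q+1} = \beta^q + \beta^{q^2+q+1}$, and let $\lambda \in S$. Then the system of equations $$X^{q+1} + \alpha X + \beta = 0, \qquad X^{q^2+1} = \lambda$$ has at most two solutions in $\mathcal{P}$. (In particular, taking $\lambda = 1$, every line of the cyclic presentation of $PG(3,q)$ meets $\mathcal{O}$ in at most two points, so $\mathcal{O}$ is an ovoid of the cyclic presentation of $PG(3,q)$.)
   Context: Let $q = 2^m$, and let $E = \mathbb{F}_{q^4} \supset K = \mathbb{F}_{q^2} \supset F = \mathbb{F}_q$. Define $\mathcal{P} = \{x \in E \mid x^{q^3+q^2+q+1} = 1\}$, $\mathcal{O} = \{x \in E \mid x^{q^2+1} = 1\}$ and $S = \{x \in K \mid x^{q+1} = 1\}$. The cyclic presentation of $PG(3,q)$ has point set $\mathcal{P}$. Its lines are the sets of zeros in $\mathcal{P}$ of polynomials $X^{q+1} + \alpha X + \beta$, where $\beta \in \mathcal{P}$ and $\alpha \in E$ satisfy $\alpha^{q+1} = \beta^q + \beta^{q^2+q+1}$; each such line has $q+1$ points. An ovoid is a set of $q^2+1$ points meeting every line in at most two points. *)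

(* Defs.v *)
From HB Require Import structures.
From mathcomp Require Import all_boot all_order all_algebra all_field.
Set Implicit Arguments. Unset Strict Implicit. Unset Printing Implicit Defensive.
Import GRing.Theory.
Local Open Scope ring_scope.

(* E is a finite field of order q^4, q = 2^m.  The subfield K = F_{q^2} of E
   is the set of fixed points of x |-> x^(q^2). *)

Definition cycP (E : finFieldType) (q : nat) : {set E} :=
  [set x : E | x ^+ (q ^ 3 + q ^ 2 + q + 1) == 1].

Definition cycO (E : finFieldType) (q : nat) : {set E} :=
  [set x : E | x ^+ (q ^ 2 + 1) == 1].

Definition subK (E : finFieldType) (q : nat) : {set E} :=
  [set x : E | x ^+ (q ^ 2) == x].

Definition cycS (E : finFieldType) (q : nat) : {set E} :=
  [set x in subK E q | x ^+ (q + 1) == 1].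

(* Main.v *)
Require Import Defs.
From HB Require Import structures.
From mathcomp Require Import all_boot all_order all_algebra all_field.
From mathcomp Require Import ring lra zify.
Import GRing.Theory.
Local Open Scope ring_scope.


Lemma quad_card (E : finFieldType) (A : {set E}) (a b c : E) :
  ~~ [&& a == 0, b == 0 & c == 0] ->
  (forall x, x \in A -> a * x ^+ 2 + b * x + c = 0) -> (#|A| <= 2)%N.
Proof.
move=> nz hA.
pose p := Poly [:: c; b; a].
have pn0 : p != 0.
  apply: contra nz => /eqP p0.
  have := coef_Poly [:: c; b; a]; rewrite -/p p0 => h.
  by move: (h 0%N) (h 1%N) (h 2%N); rewrite !coef0 /= => <- <- <-; rewrite eqxx.
have := max_poly_roots pn0 (rs := enum A).
rewrite enum_uniq cardE => /(_ _ isT) H.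
have : (size (enum A) < 3)%N.
  apply: leq_trans (H _) (size_Poly _).
  apply/allP => x; rewrite mem_enum => /hA hx.
  by rewrite /root horner_Poly /= mul0r add0r -hx; apply/eqP; ring.
by [].
Qed.

Theorem theorem3p2 (m : nat) (E : finFieldType)
  (hE : #|E| = ((2 ^ m) ^ 4)%N)
  (alpha beta lambda : E)
  (hbeta : beta \in cycP E (2 ^ m))
  (halpha : alpha ^+ (2 ^ m + 1) =
            beta ^+ (2 ^ m) + beta ^+ ((2 ^ m) ^ 2 + 2 ^ m + 1))
  (hlambda : lambda \in cycS E (2 ^ m)) :
  (#|[set x in cycP E (2 ^ m) |
      ((x ^+ (2 ^ m + 1) + alpha * x + beta == 0)
      && (x ^+ ((2 ^ m) ^ 2 + 1) == lambda))%R]| <= 2)%N.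
Proof.
have ch2 : (2 \in [pchar E])%N.
  by apply: (@card_finPcharP _ 2 (m * 4)); rewrite // expnM.
have chn : [pchar E].-nat ((2^m)^2)%N.
  by rewrite -expnM pnatX (pnatE _ (isT : prime 2)) ch2.
set q := (2 ^ m)%N in hE hbeta halpha hlambda chn *.
have q_gt0 : (0 < q)%N by rewrite expn_gt0.
have bn0 : beta != 0.
  apply/eqP => b0; move: hbeta; rewrite inE b0 expr0n /=.
  by rewrite addn1 /= eq_sym oner_eq0.
move: hlambda; rewrite inE => /andP [_ /eqP hl].
have key : forall x : E, x ^+ (q + 1) + alpha * x + beta = 0 ->
    x ^+ (q ^ 2 + 1) = lambda -> x ^+ (q + 1) = alpha * x + beta.
  move=> x h _; apply/eqP; rewrite -(oppr_pchar2 ch2 (alpha * x + beta)).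
  by rewrite -addr_eq0 addrA h.
have [a0 | an0] := eqVneq alpha 0.
  apply: (@quad_card _ _ (beta ^+ (q - 1)) 0 (- lambda)).
    by rewrite expf_eq0 (negbTE bn0) andbF.
  move=> x; rewrite !inE => /andP [_ /andP [/eqP h1 /eqP h2]].
  have h3 := key x h1 h2; rewrite a0 mul0r add0r in h3.
  have e : (q ^ 2 + 1 = (q + 1) * (q - 1) + 2)%N.
    rewrite expnS expn1; move: q_gt0; clear; nia.
  rewrite e exprD exprM h3 in h2.
  by rewrite mul0r addr0 h2 subrr.
set a1 := alpha ^+ (q ^ 2); set b1 := beta ^+ (q ^ 2).
apply: (@quad_card _ _ (b1 * alpha) (1 + a1 * alpha * lambda + b1 * beta)
          (a1 * lambda * beta)).
  by rewrite mulf_eq0 expf_eq0 (negbTE bn0) (negbTE an0) andbF.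
move=> x; rewrite !inE => /andP [_ /andP [/eqP h1 /eqP h2]].
have h3 := key x h1 h2.
set y := x ^+ (q ^ 2); set u := x ^+ q.
have yx : y * x = lambda by rewrite -h2 exprD expr1.
have ux : x ^+ (q + 1) = u * x by rewrite exprD expr1.
have Hy : y ^+ (q + 1) + a1 * y + b1 = 0.
  have := congr1 (fun z => z ^+ (q ^ 2)) h1; rewrite /= expr0n.
  have -> : (q ^ 2 == 0)%N = false by rewrite expn_eq0 eqn0Ngt q_gt0.
  rewrite !(exprDn_pchar _ _ chn) exprMn exprAC => H.
  exact: H.
have H2 : 1 + a1 * lambda * u + b1 * (u * x) = 0.
  have -> : (1 : E) = y ^+ (q + 1) * (u * x).
    by rewrite -ux -exprMn yx hl.
  rewrite -yx.
  have -> : y ^+ (q + 1) * (u * x) + a1 * (y * x) * u + b1 * (u * x)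
          = (u * x) * (y ^+ (q + 1) + a1 * y + b1) by ring.
  by rewrite Hy mulr0.
rewrite ux in h3.
have -> : b1 * alpha * x ^+ 2 + (1 + a1 * alpha * lambda + b1 * beta) * x
          + a1 * lambda * beta
  = x * (1 + a1 * lambda * u + b1 * (u * x))
    + (a1 * lambda + b1 * x) * (alpha * x + beta - u * x) by ring.
by rewrite H2 h3 subrr !mulr0 addr0.
Qed.
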